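(* Let $(U,d)$ be an asymmetric pseudometric space, $k\ge 2$ an integer, $R>0$, and let $U'$ be the output of Cluster$(U,d,R)$. Let $G$ be the digraph on vertex set $U'$ with an arc $ij$ ($i\ne j$) iff $d(i,j)<\frac{R}{2k}$. Then every directed cycle in $G$ has at least $2k+2$ distinct vertices.
   Context: An asymmetric pseudometric space $(U,d)$ is a finite set $U$ with $d:U\times U\to\mathbb{R}_{\ge 0}$ such that $d(u,u)=0$ and $d(u,v)\le d(u,w)+d(w,v)$ for all $u,v,w\in U$ ($d$ need not be symmetric). $d_{\max}(u,v)=\max\{d(u,v),d(v,u)\}$. Cluster$(U,d,R)$: initially all points are unmarked; while an unmarked point exists, choose any unmarked point $c$, let $A=\{v\in U\text{ unmarked}: d_{\max}(c,v)<R\}$, mark all points of $A$, and add $c$ to the output set $U'$. It returns $U'$. *)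

(* Defs.v *)
From HB Require Import structures.
From mathcomp Require Import all_boot all_order all_algebra.
Set Implicit Arguments. Unset Strict Implicit. Unset Printing Implicit Defensive.
Import Order.TTheory GRing.Theory Num.Theory.
Local Open Scope ring_scope.

Section Cluster.
Variables (F : realFieldType) (T : finType).

Definition asym_pseudometric (d : T -> T -> F) : Prop :=
  [/\ forall u v, 0 <= d u v,
      forall u, d u u = 0 &
      forall u v w, d u v <= d u w + d w v].

Definition dmax (d : T -> T -> F) (u v : T) : F := Num.max (d u v) (d v u).

(* Execution of Cluster(U,d,R): the state is (set of marked points,
   output list so far); [cluster_from d R marked out res] means that the
   algorithm, started in this state, can terminate with final output [res]
   (the choice of the unmarked point c is arbitrary). *)
Inductive cluster_from (d : T -> T -> F) (R : F) :
    {set T} -> seq T -> seq T -> Prop :=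
| cluster_done (marked : {set T}) (out : seq T) :
    (forall v, v \in marked) -> cluster_from d R marked out out
| cluster_step (marked : {set T}) (out : seq T) (c : T) (res : seq T) :
    c \notin marked ->
    cluster_from d R
      (marked :|: [set v | (v \notin marked) && (dmax d c v < R)])
      (rcons out c) res ->
    cluster_from d R marked out res.

Definition cluster_output (d : T -> T -> F) (R : F) (U' : seq T) : Prop :=
  cluster_from d R set0 [::] U'.

Definition G_arc (d : T -> T -> F) (R : F) (k : nat) (U' : seq T) : rel T :=
  fun i j => [&& i \in U', j \in U', i != j & d i j < R / (2 * k)%:R].

End Cluster.

(* Main.v *)
Require Import Defs.
From mathcomp Require Import all_boot all_order all_algebra.
From mathcomp Require Import lra zify.
Import Order.TTheory GRing.Theory Num.Theory.
Set Implicit Arguments. Unset Strict Implicit.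
Local Open Scope ring_scope.

Section Aux.
Variables (F : realFieldType) (T : finType) (d : T -> T -> F) (R : F).
Hypothesis hd : asym_pseudometric d.
Hypothesis hR : 0 < R.

Definition Inv (marked : {set T}) (out : seq T) : Prop :=
  (forall x v, x \in out -> dmax d x v < R -> v \in marked) /\
  (forall i j, i \in out -> j \in out -> i != j -> R <= dmax d i j).

Lemma dmaxC u v : dmax d u v = dmax d v u.
Proof. by rewrite /dmax maxC. Qed.

Lemma inv_res marked out res :
  cluster_from d R marked out res -> Inv marked out ->
  forall i j, i \in res -> j \in res -> i != j -> R <= dmax d i j.
Proof.
elim=> {marked out res} [marked out _ [_ H]|marked out c res cn _ IH [H1 H2]].
  exact: H.
apply: IH; split.
- move=> x v; rewrite mem_rcons inE => /orP[/eqP->|xo] hv.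
    rewrite inE; case: (boolP (v \in marked)) => //= vm.
    by rewrite inE vm hv.
  by rewrite inE (H1 x v xo hv).
- have Hc : forall x, x \in out -> R <= dmax d x c.
    move=> x xo; rewrite leNgt; apply/negP => hx.
    by move: cn; rewrite (H1 x c xo hx).
  move=> i j; rewrite !mem_rcons !inE.
  move=> /orP[/eqP->|io] /orP[/eqP->|jo] ij.
  + by rewrite eqxx in ij.
  + by rewrite dmaxC; apply: Hc.
  + exact: Hc.
  + exact: H2.
Qed.

Lemma path_bound (r : F) (k : nat) U' a p :
  path (G_arc d R k U') a p -> R / (2 * k)%:R = r ->
  d a (last a p) <= (size p)%:R * r.
Proof.
case: hd => d0 dd dt.
move=> + hr; elim: p a => [|b p IH] a /=.
  by rewrite dd mul0r.
case/andP => /and4P[_ _ _ hab] hp.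
have h0 := dt a (last b p) b.
have := IH b hp; rewrite hr in hab; move: hab h0; rewrite -[(size p).+1]addn1 natrD mulrDl mul1r.
move=> h1 h0; set X := (_ * r); move=> h2; lra.
Qed.

Lemma path_bound_lt (r : F) (k : nat) U' a b p :
  path (G_arc d R k U') a (b :: p) -> R / (2 * k)%:R = r ->
  d a (last b p) < (size p).+1%:R * r.
Proof.
case: (hd) => d0 dd dt.
move=> /= /andP[/and4P[_ _ _ hab] hp] hr.
have h0 := dt a (last b p) b.
have := path_bound hp hr; rewrite hr in hab; move: hab h0.
rewrite -[(size p).+1]addn1 natrD mulrDl mul1r.
move=> h1 h0; set X := (_ * r); move=> h2; lra.
Qed.

Lemma path_bound_lt' (r : F) (k : nat) U' a p :
  path (G_arc d R k U') a p -> p != [::] -> R / (2 * k)%:R = r ->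
  d a (last a p) < (size p)%:R * r.
Proof. by case: p => [//|b p] /= hp _ hr; apply: path_bound_lt hp hr. Qed.

End Aux.

Theorem lemma5p4 (F : realFieldType) (T : finType) (d : T -> T -> F)
    (k : nat) (R : F) (U' : seq T) :
  asym_pseudometric d -> (2 <= k)%N -> 0 < R ->
  cluster_output d R U' ->
  forall s : seq T, s != [::] -> uniq s -> {subset s <= U'} ->
    cycle (G_arc d R k U') s -> (2 * k + 2 <= size s)%N.
Proof.
move=> hd hk hR hc s sn us sU.
have Hi : Inv d R set0 [::] by split.
have Hp := inv_res hc Hi.
case: s sn us sU => [//|x [|y t]] _ _ _ /=.
  by rewrite /G_arc eqxx !andbF.
case/andP => /and4P[xU yU xy hxy] hp.
have nn : rcons t x != [::] by case: t {hp}.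
have hb := path_bound_lt' hd hp nn (erefl _).
rewrite last_rcons size_rcons in hb.
have := Hp x y xU yU xy.
rewrite /dmax le_max => hmax.
rewrite leqNgt; apply/negP => hs.
have hn : ((size t).+1 <= 2 * k)%N by rewrite -ltnS -[(2 * k).+1]addn1; lia.
have kpos : (0 : F) < (2 * k)%:R by rewrite ltr0n; lia.
set r := R / (2 * k)%:R in hxy hb.
have r0 : 0 < r by rewrite divr_gt0.
have hr : (2 * k)%:R * r = R by rewrite /r mulrC divfK // gt_eqF.
have hn' : ((size t).+1)%:R <= ((2 * k)%:R : F) by rewrite ler_nat.
have h1 : ((size t).+1)%:R * r <= R.
  by rewrite -hr ler_pM2r.
have h2 : r <= R.
  rewrite -hr; apply: ler_peMl; first exact: ltW.
  by rewrite ler1n muln_gt0 /= ltnW.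
set X := (_ * r) in hb h1.
case/orP: hmax => ?; lra.
Qed.
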